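(* Let $D$ be a regular $(v,k,\lambda,\mu)$-PDS in a finite group $G$ with $0<\mu<k$ and $\sqrt\Delta\in\mathbb{Z}$, and let $\alpha\in\{1,2\}$. If some nonprincipal linear character of $G$ has order dividing $\pi_\alpha$, then every linear character of $G$ whose order is coprime to $\sqrt\Delta$ has order dividing $\pi_\alpha$.
   Context: A $(v,k,\lambda,\mu)$-PDS in a group $G$ of order $v$ is a $k$-subset $D$ such that every nonidentity element of $D$ is $xy^{-1}$ ($x,y\in D$) in exactly $\lambda$ ways and every nonidentity element of $G\setminus D$ in exactly $\mu$ ways; regular means $D=D^{(-1)}$ and $1\notin D$. $\Delta=(\lambda-\mu)^2+4(k-\mu)$, $\theta_{1,2}=\frac12(\lambda-\mu\pm\sqrt\Delta)$. Every prime $p$ dividing $v$ but not $\sqrt\Delta$ divides exactly one of $k-\theta_1$, $k-\theta_2$. For $i\in\{1,2\}$, $\Pi_i$ is the set of primes $p$ with $p\mid v$, $p\nmid\sqrt\Delta$ and $p\mid k-\theta_i$, and $\pi_i=\prod_{p\in\Pi_i}p^{e_p}$ where $p^{e_p}$ is the exact power of $p$ dividing $v$. $\chi(D)=\sum_{d\in D}\chi(d)$. *)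

(* Defs.v *)
From HB Require Import structures.
From mathcomp Require Import all_boot all_order all_algebra all_fingroup all_solvable all_field all_character.
Set Implicit Arguments. Unset Strict Implicit. Unset Printing Implicit Defensive.
Import Order.TTheory GRing.Theory Num.Theory.

Definition pds_count (gT : finGroupType) (D : {set gT}) (g : gT) : nat :=
  #|[set p : gT * gT | [&& p.1 \in D, p.2 \in D & (p.1 * p.2^-1)%g == g]]|.

Definition is_PDS (gT : finGroupType) (G : {group gT}) (D : {set gT})
    (v k lam mu : nat) : Prop :=
  [/\ #|G| = v, D \subset G, #|D| = k &
      forall g, g \in G -> g != 1%g ->
        (g \in D -> pds_count D g = lam) /\ (g \notin D -> pds_count D g = mu)].

Definition regular_PDS (gT : finGroupType) (D : {set gT}) : Prop :=
  [set x^-1 | x in D]%g = D /\ (1%g \notin D).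

Definition pds_Delta (k lam mu : nat) : int :=
  ((lam%:Z - mu%:Z) ^+ 2 + 4 * (k%:Z - mu%:Z))%R.

(* theta_1 = (lam - mu + s)/2, theta_2 = (lam - mu - s)/2, where s = sqrt Delta
   (an integer; lam - mu and s have the same parity, so the division is exact). *)
Definition pds_theta (alpha : nat) (lam mu s : nat) : int :=
  if alpha == 1%N then ((lam%:Z - mu%:Z + s%:Z) %/ 2)%Z
  else ((lam%:Z - mu%:Z - s%:Z) %/ 2)%Z.

Definition pds_Pi (alpha v k lam mu s : nat) : nat_pred :=
  [pred p | [&& prime p, p %| v, ~~ (p %| s) &
             ((p%:Z) %| (k%:Z - pds_theta alpha lam mu s)%R)%Z]].

Definition pds_pi (alpha v k lam mu s : nat) : nat :=
  v`_(pds_Pi alpha v k lam mu s).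

(* Main.v *)
Require Import Defs.
From HB Require Import structures.
From mathcomp Require Import all_boot all_order all_algebra all_fingroup all_solvable all_field all_character.
Set Implicit Arguments. Unset Strict Implicit. Unset Printing Implicit Defensive.
Import Order.TTheory GRing.Theory Num.Theory.
From mathcomp Require Import ring zify.
Local Open Scope ring_scope.

Lemma sum_lin_char_eq0 (gT : finGroupType) (G : {group gT}) (xi : 'CF(G)) :
  xi \is a linear_char -> xi != 1 -> \sum_(g in G) xi g = 0.
Proof.
move=> Lxi nt.
have /irrP[i Di] := lin_char_irr Lxi.
have i0 : i != 0 by apply: contra nt => /eqP i0; rewrite Di i0 irr0.
have := cfdot_irr i 0; rewrite (negPf i0) -Di irr0 cfdotE.
have -> : \sum_(x in G) xi x * ((1 : 'CF(G)) x)^* = \sum_(x in G) xi x.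
  by apply: eq_bigr => x Gx; rewrite cfun1E Gx conjC1 mulr1.
move/eqP; rewrite mulf_eq0 invr_eq0 pnatr_eq0 (negPf (lt0n_neq0 (cardG_gt0 G))) /=.
by move/eqP.
Qed.

Lemma pds_count1 (gT : finGroupType) (D : {set gT}) : pds_count D 1%g = #|D|.
Proof.
rewrite /pds_count.
have -> : [set p : gT * gT | [&& p.1 \in D, p.2 \in D & (p.1 * p.2^-1)%g == 1%g]]
          = [set (x, x) | x in D].
  apply/setP => -[x y]; rewrite inE /= divg_eq1; apply/idP/imsetP.
  - by case/and3P => Dx Dy /eqP <-; exists x.
  - by case=> z Dz [-> ->]; rewrite Dz eqxx.
by rewrite card_imset // => x y [].
Qed.

Lemma pds_square (gT : finGroupType) (G : {group gT}) (D : {set gT})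
    (v k lam mu : nat) (xi : 'CF(G)) :
  is_PDS G D v k lam mu -> regular_PDS D -> xi \is a linear_char -> xi != 1 ->
  (\sum_(d in D) xi d) ^+ 2 =
    (lam%:R - mu%:R) * (\sum_(d in D) xi d) + (k%:R - mu%:R).
Proof.
case=> _ sDG cardD cnt [invD n1D] Lxi nt.
set X := \sum_(d in D) xi d.
have step1 : X ^+ 2 = \sum_(x in D) \sum_(y in D) xi (x * y^-1)%g.
  rewrite expr2 /X big_distrlr /=; apply: eq_bigr => x Dx.
  rewrite -{1}invD big_imset /=; last by move=> y z _ _ /invg_inj.
  apply: eq_bigr => y Dy; rewrite lin_charM // ?groupV (subsetP sDG) //.
have step2 : \sum_(x in D) \sum_(y in D) xi (x * y^-1)%g
             = \sum_g xi g *+ pds_count D g.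
  rewrite pair_big /= (partition_big (fun p => (p.1 * p.2^-1)%g) xpredT) //=.
  apply: eq_bigr => g _.
  rewrite (eq_bigr (fun _ => xi g)); last by move=> p /andP[_ /eqP->].
  rewrite /pds_count -sumr_const; apply: eq_bigl => p; by rewrite inE andbA.
have sumG := sum_lin_char_eq0 Lxi nt.
rewrite (bigD1 1%g) ?group1 //= lin_char1 // in sumG.
have step3 : \sum_g xi g *+ pds_count D g
   = k%:R + mu%:R * (-1) + (lam%:R - mu%:R) * X.
  rewrite (bigID (fun g => g \in G)) /= [X in _ + X]big1 ?addr0; last first.
    by move=> g nGg; rewrite cfun0 // mul0rn.
  rewrite (bigD1 1%g) ?group1 //= lin_char1 // pds_count1 cardD -addrA.
  congr (_ + _).
  rewrite (eq_bigr (fun g => mu%:R * xi g + (lam%:R - mu%:R) * (if g \in D then xi g else 0))); last first.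
    move=> g /andP[Gg ng1]; have [Dg|nDg] := boolP (g \in D).
    - rewrite ((cnt g Gg ng1).1 Dg) -mulr_natl; ring.
    - rewrite ((cnt g Gg ng1).2 nDg) -mulr_natl; ring.
  rewrite big_split /= -!mulr_sumr -big_mkcondr /=.
  have -> : \sum_(i in G | i != 1%g) xi i = -1.
    by apply/eqP; move/eqP: sumG; rewrite addrC addr_eq0.
  congr (_ + _ * _); rewrite /X; apply: eq_bigl => g.
  case Dg: (g \in D); rewrite ?andbT ?andbF // (subsetP sDG) //=.
  by apply/eqP => g1; move: Dg; rewrite g1 (negPf n1D).
rewrite step1 step2 step3; ring.
Qed.
Lemma parity_aux (a s c : int) : s ^+ 2 = a ^+ 2 + 4 * c -> (2 %| a + s)%Z.
Proof.
rewrite !expr2 => h.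
apply/dvdzP; exists ((a + s) %/ 2)%Z.
have := divz_eq (a + s) 2.
have := modz_ge0 (a+s) (isT : (2:int) != 0).
have := ltz_pmod (a+s) (isT : (0:int) < 2).
set r := ((a + s) %% 2)%Z; set q := ((a + s) %/ 2)%Z => h1 h2 h3.
nia.
Qed.

Lemma theta_spec (k lam mu s : nat) :
  (s%:Z ^+ 2)%R = pds_Delta k lam mu ->
  pds_theta 1 lam mu s * 2 = lam%:Z - mu%:Z + s%:Z /\
  pds_theta 2 lam mu s * 2 = lam%:Z - mu%:Z - s%:Z.
Proof.
rewrite /pds_Delta /pds_theta /= => hD; split; apply: divzK.
  exact: parity_aux hD.
have := parity_aux (s := - s%:Z) (a := lam%:Z - mu%:Z) (c := k%:Z - mu%:Z).
by rewrite sqrrN; apply.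
Qed.

Lemma theta_diff (k lam mu s : nat) :
  (s%:Z ^+ 2)%R = pds_Delta k lam mu ->
  pds_theta 1 lam mu s - pds_theta 2 lam mu s = s%:Z.
Proof. case/theta_spec=> h1 h2; lia. Qed.

Lemma natzR (R : pzRingType) (n : nat) : ((n%:Z)%:~R : R) = n%:R.
Proof. by []. Qed.

Lemma theta_vals (k lam mu s : nat) (X : algC) :
  (s%:Z ^+ 2)%R = pds_Delta k lam mu ->
  X ^+ 2 = (lam%:R - mu%:R) * X + (k%:R - mu%:R) ->
  X = (pds_theta 1 lam mu s)%:~R \/ X = (pds_theta 2 lam mu s)%:~R.
Proof.
move=> hD hX; have [h1 h2] := theta_spec hD.
move: hD; rewrite /pds_Delta => /(congr1 (fun z : int => z%:~R : algC)).
rewrite !rmorphD /= !rmorphXn /= !rmorphM /= !rmorphB /= => hC.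
have E : (2 * X - (lam%:R - mu%:R) - (s%:R : algC)) * (2 * X - (lam%:R - mu%:R) + s%:R)
   = 4 * (X ^+ 2 - ((lam%:R - mu%:R) * X + (k%:R - mu%:R)))
     + (((lam%:R - mu%:R) ^+ 2 + 4 * (k%:R - mu%:R)) - (s%:R) ^+ 2).
  ring.
rewrite hX subrr mulr0 add0r in E.
rewrite !natzR /= in hC.
move: E; rewrite -hC subrr => /eqP; rewrite mulf_eq0 => /orP[] /eqP E.
- left; apply: (mulIf (x := 2)); first by rewrite pnatr_eq0.
  have -> : (pds_theta 1 lam mu s)%:~R * 2 = ((pds_theta 1 lam mu s * 2)%:~R : algC) by rewrite intrM.
  rewrite h1 ?rmorphD ?rmorphB /= ?natzR.
  apply/eqP; rewrite -subr_eq0; apply/eqP; rewrite -E; ring.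
- right; apply: (mulIf (x := 2)); first by rewrite pnatr_eq0.
  have -> : (pds_theta 2 lam mu s)%:~R * 2 = ((pds_theta 2 lam mu s * 2)%:~R : algC) by rewrite intrM.
  rewrite h2 ?rmorphD ?rmorphB /= ?natzR.
  apply/eqP; rewrite -subr_eq0; apply/eqP; rewrite -E; ring.
Qed.
Lemma cf_unity (gT : finGroupType) (G : {group gT}) (phi : 'CF(G)) d :
  d \in G -> phi d ^+ #[phi]%CF = 1.
Proof. by move=> Gd; rewrite -exp_cfunE // exp_cforder cfun1E Gd. Qed.

Lemma cong_lemma (gT : finGroupType) (G : {group gT}) (D : {set gT})
    (al be : 'CF(G)) (p : nat) (a c : int) :
  D \subset G -> al \is a linear_char -> be \is a linear_char -> prime p ->
  #[be]%CF = p -> coprime #[al]%CF p ->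
  \sum_(d in D) al d = a%:~R -> \sum_(d in D) (al * be) d = c%:~R ->
  (p%:Z %| a - c)%Z.
Proof.
move=> sDG La Lb pp ob cop Ha Hc.
set e := #[al]%CF in cop.
have ae d : d \in G -> al d ^+ e = 1 by apply: cf_unity.
have bp d : d \in G -> be d ^+ p = 1 by rewrite -ob; apply: cf_unity.
have Hj j : (0 < j < p)%N -> \sum_(d in D) (al * be ^+ j) d = c%:~R.
  case/andP=> j0 jp.
  set m := chinese e p 1 j.
  have m1 : (m %% e = 1 %% e)%N := chinese_modl cop 1 j.
  have mj : (m %% p = j %% p)%N := chinese_modr cop 1 j.
  have cm : coprime m (e * p)%N.
    rewrite coprimeMr; apply/andP; split.
      by rewrite -coprime_modl m1 coprime_modl coprime1n.
    by rewrite -coprime_modl mj coprime_modl coprime_sym prime_coprime // gtnNdvd.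
  have [u Hu] := Qn_aut_exists cm.
  rewrite -[RHS](rmorph_int u) -Hc rmorph_sum; apply: eq_bigr => d Dd.
  have Gd := subsetP sDG d Dd.
  rewrite [(al * be) d]cfunE Hu; last first.
    by rewrite exprMn exprM ae // expr1n (mulnC e p) exprM bp // expr1n mulr1.
  rewrite cfunE exp_cfunE // exprMn.
  rewrite -(expr_mod m (ae d Gd)) m1 (expr_mod 1 (ae d Gd)) expr1.
  by rewrite -(expr_mod m (bp d Gd)) mj (expr_mod j (bp d Gd)).
have [n pn] : exists n, p = n.+1 by exists p.-1; rewrite prednK // prime_gt0.
have S : \sum_(j < p) \sum_(d in D) (al * be ^+ j) d = a%:~R + c%:~R *+ n.
  rewrite pn big_ord_recl /= expr0 mulr1 Ha; congr (_ + _).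
  rewrite (eq_bigr (fun _ => c%:~R)); first by rewrite sumr_const card_ord.
  by move=> i _; apply: Hj; move: (ltn_ord i); rewrite pn /bump /=; lia.
have T : \sum_(j < p) \sum_(d in D) (al * be ^+ j) d
          = p%:R * \sum_(d in D | be d == 1) al d.
  rewrite exchange_big /= big_mkcondr /= mulr_sumr; apply: eq_bigr => d Dd.
  have Gd := subsetP sDG d Dd.
  rewrite (eq_bigr (fun j : 'I_p => al d * be d ^+ j)); last first.
    by move=> j _; rewrite cfunE exp_cfunE.
  rewrite -mulr_sumr; case: eqP => [->|nb1].
    rewrite (eq_bigr (fun _ => 1)) ?sumr_const ?card_ord; last by move=> *; rewrite expr1n.
    by rewrite GRing.mulrC.
  have : (be d - 1) * \sum_(i < p) be d ^+ i = 0 by rewrite -subrX1 bp // subrr.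
  move/eqP; rewrite mulf_eq0 subr_eq0 => /orP[/eqP//|/eqP->].
  by rewrite !mulr0.
set y := \sum_(d in D | be d == 1) al d in T.
have yA : y \in Aint.
  by apply: rpred_sum => d _; apply: Aint_char; apply: lin_charW.
have ey : ((a + c * n%:Z)%:~R : algC) = p%:R * y.
  by rewrite -T S rmorphD /= intrM mulr_natr.
have yQ : y \in Crat.
  have -> : y = (a + c * n%:Z)%:~R / p%:R.
    by rewrite ey mulrAC divff ?mul1r // pnatr_eq0 -lt0n prime_gt0.
  by rewrite rpred_div ?rpred_int ?rpred_nat.
have /intrP[t yt] := Cint_rat_Aint yQ yA.
rewrite yt -[p%:R]/((p%:Z)%:~R) -intrM in ey.
move/intr_inj: ey => ey.
apply/dvdzP; exists (t - c); rewrite pn in ey *.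
nia.
Qed.

Lemma cforder_one (gT : finGroupType) (G : {group gT}) : #[(1 : 'CF(G))]%CF = 1%N.
Proof. by apply/eqP; rewrite -dvdn1 dvdn_cforder expr1. Qed.

Lemma nt_of_order (gT : finGroupType) (G : {group gT}) (phi : 'CF(G)) p :
  prime p -> #[phi]%CF = p -> phi != 1.
Proof.
move=> pp op; apply/eqP => e1; move: op; rewrite e1 cforder_one => p1.
by rewrite -p1 in pp.
Qed.

Lemma prime_order_power (gT : finGroupType) (G : {group gT}) (xi : 'CF(G)) p :
  xi \is a linear_char -> prime p -> (p %| #[xi]%CF)%N ->
  exists be : 'CF(G), be \is a linear_char /\ #[be]%CF = p.
Proof.
move=> Lxi pp pd; set n := #[xi]%CF in pd.
have n0 : (0 < n)%N := cforder_lin_char_gt0 Lxi.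
exists (xi ^+ (n %/ p)); split; first exact: rpredX.
have dp : (#[xi ^+ (n %/ p)]%CF %| p)%N.
  by rewrite dvdn_cforder -exprM divnK // exp_cforder.
suff nt1 : #[xi ^+ (n %/ p)]%CF != 1%N by exact: (elimT (prime_nt_dvdP pp nt1) dp).
apply/negP => /eqP o1.
have : (#[xi ^+ (n %/ p)]%CF %| 1)%N by rewrite o1.
rewrite dvdn_cforder expr1 -dvdn_cforder => /dvdn_leq.
have np0 : (0 < n %/ p)%N by rewrite divn_gt0 ?prime_gt0 // dvdn_leq.
move/(_ np0); rewrite leqNgt ltn_Pdiv ?prime_gt1 //.
Qed.

Lemma mul_nontriv (gT : finGroupType) (G : {group gT}) (al be : 'CF(G)) p q :
  prime p -> prime q -> p != q -> #[al]%CF = q -> #[be]%CF = p -> al * be != 1.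
Proof.
move=> pp pq npq oa ob; apply/eqP => e1.
have : (#[be]%CF %| q)%N.
  rewrite dvdn_cforder -(mul1r (be ^+ q)).
  by rewrite -[X in X * _](exp_cforder al) oa -exprMn e1 expr1n.
by rewrite ob dvdn_prime2 // (negPf npq).
Qed.

Lemma theta_eq (k lam mu s r : nat) (x y : int) :
  (s%:Z ^+ 2)%R = pds_Delta k lam mu -> ~~ (r %| s)%N ->
  (x = pds_theta 1 lam mu s \/ x = pds_theta 2 lam mu s) ->
  (y = pds_theta 1 lam mu s \/ y = pds_theta 2 lam mu s) ->
  (r%:Z %| x - y)%Z -> x = y.
Proof.
move=> hD nrs hx hy; have hd := theta_diff hD.
case: hx => ->; case: hy => -> //; rewrite ?hd.
- by move=> h; case/negP: nrs; move: h; rewrite dvdzE.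
- rewrite -opprB hd => h; case/negP: nrs; move: h; rewrite dvdzE abszN.
  by [].
Qed.

Lemma val_int (gT : finGroupType) (G : {group gT}) (D : {set gT})
    (v k lam mu s : nat) (xi : 'CF(G)) :
  is_PDS G D v k lam mu -> regular_PDS D -> (s%:Z ^+ 2)%R = pds_Delta k lam mu ->
  xi \is a linear_char -> xi != 1 ->
  exists b : int, \sum_(d in D) xi d = b%:~R /\
    (b = pds_theta 1 lam mu s \/ b = pds_theta 2 lam mu s).
Proof.
move=> hP reg hD L nt.
case: (theta_vals hD (pds_square hP reg L nt)) => h.
- by exists (pds_theta 1 lam mu s); split => //; left.
- by exists (pds_theta 2 lam mu s); split => //; right.
Qed.

Lemma sum_one (gT : finGroupType) (G : {group gT}) (D : {set gT}) k :
  D \subset G -> #|D| = k -> \sum_(d in D) (1 : 'CF(G)) d = (k%:Z)%:~R.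
Proof.
move=> sDG cD; rewrite (eq_bigr (fun _ => 1)) ?sumr_const ?cD //.
by move=> d Dd; rewrite cfun1E (subsetP sDG).
Qed.

Local Close Scope ring_scope.

Theorem mainTheorem8 (gT : finGroupType) (G : {group gT}) (D : {set gT})
    (v k lam mu s alpha : nat) :
  is_PDS G D v k lam mu -> regular_PDS D ->
  (0 < mu)%N -> (mu < k)%N ->
  (s%:Z ^+ 2)%R = pds_Delta k lam mu ->
  (alpha = 1%N \/ alpha = 2%N) ->
  (exists xi : 'CF(G), [/\ xi \is a linear_char, xi != 1%R &
       (#[xi]%CF %| pds_pi alpha v k lam mu s)%N]) ->
  forall xi : 'CF(G), xi \is a linear_char -> coprime #[xi]%CF s ->
    (#[xi]%CF %| pds_pi alpha v k lam mu s)%N.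
Proof.
move=> hP reg mu0 muk hD halpha [xi0 [L0 nt0 o0]] xi Lxi cop.
have [vG sDG cD cnt] := hP.
rewrite /pds_pi in o0 *; set P := pds_Pi alpha v k lam mu s in o0 *.
have v0 : (0 < v)%N by rewrite -vG cardG_gt0.
have nv : (#[xi]%CF %| v)%N by rewrite -vG cforder_lin_char_dvdG.
suff Pn : P.-nat #[xi]%CF by rewrite -(part_pnat_id Pn) partn_dvd.
apply/pnatP; first exact: cforder_lin_char_gt0.
move=> p pp pdv.
have pv : (p %| v)%N := dvdn_trans pdv nv.
have ps : ~~ (p %| s)%N.
  apply/negP => ps; have := coprime_dvdl pdv cop.
  by rewrite prime_coprime // ps.
have [be [Lb ob]] := prime_order_power Lxi pp pdv.
have n01 : (1 < #[xi0]%CF)%N.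
  rewrite ltn_neqAle eq_sym cforder_lin_char_gt0 // andbT.
  by apply: contra nt0; rewrite -dvdn1 dvdn_cforder expr1.
set q := pdiv #[xi0]%CF.
have qpr : prime q := pdiv_prime n01.
have qP : q \in P.
  apply: (pnatPpi (part_pnat P v)); rewrite mem_primes qpr part_gt0 /=.
  exact: dvdn_trans (pdiv_dvd _) o0.
move: (qP); rewrite /P /pds_Pi inE => /and4P[_ qv qs qk].
have [al [La oa]] := prime_order_power L0 qpr (pdiv_dvd _).
rewrite /P /pds_Pi inE; apply/and4P; split => //.
have [epq|npq] := eqVneq p q; first by rewrite epq.
have [b [Hb Vb]] := val_int hP reg hD Lb (nt_of_order pp ob).
have [a0 [Ha Va]] := val_int hP reg hD La (nt_of_order qpr oa).
have [c [Hc Vc]] := val_int hP reg hD (rpredM La Lb) (mul_nontriv pp qpr npq oa ob).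
have S1 := sum_one sDG cD.
have c1 : coprime #[(1 : 'CF(G))]%CF p by rewrite cforder_one coprime1n.
have c1q : coprime #[(1 : 'CF(G))]%CF q by rewrite cforder_one coprime1n.
have h1 : (p%:Z %| (k%:Z - b)%R)%Z.
  by apply: (cong_lemma sDG (cfun1_lin_char G) Lb pp ob c1 S1); rewrite mul1r.
have h2 : (q%:Z %| (k%:Z - a0)%R)%Z.
  by apply: (cong_lemma sDG (cfun1_lin_char G) La qpr oa c1q S1); rewrite mul1r.
have cqp : coprime #[al]%CF p by rewrite oa prime_coprime // dvdn_prime2 // eq_sym npq.
have cpq : coprime #[be]%CF q by rewrite ob prime_coprime // dvdn_prime2 // npq.
have h3 : (p%:Z %| (a0 - c)%R)%Z := cong_lemma sDG La Lb pp ob cqp Ha Hc.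
have h4 : (q%:Z %| (b - c)%R)%Z.
  by apply: (cong_lemma sDG Lb La qpr oa cpq Hb); rewrite mulrC.
set th := pds_theta alpha lam mu s in qk *.
have Vth : th = pds_theta 1 lam mu s \/ th = pds_theta 2 lam mu s.
  by rewrite /th; case: halpha => ->; [left|right].
have ea : a0 = th.
  apply: (theta_eq hD qs Va Vth).
  have -> : (a0 - th = (k%:Z - th) - (k%:Z - a0))%R by ring.
  by rewrite rpredB.
have ec : c = th.
  apply: esym; apply: (theta_eq hD ps Vth Vc); by rewrite -ea.
have eb : b = c := theta_eq hD qs Vb Vc h4.
by rewrite -ec -eb.
Qed.
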